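(* Consider the constant-resource type system, and assume the program is well-typed w.r.t. the signature $\Sigma$ in that system. Let $X\subseteq\mathrm{dom}(\Gamma)$. Suppose $\models E:\Gamma$, $E\vdash e\Downarrow v$, $\Sigma;\Gamma\vdash^{q}_{q'}e:A$ is derivable in the constant-resource type system, $\curlyvee(A\mid A,A)$ holds, and $\curlyvee(\Gamma(x)\mid\Gamma(x),\Gamma(x))$ holds for every $x\in\mathrm{dom}(\Gamma)\setminus X$. Then $e$ is constant resource w.r.t. $X$, i.e. $\mathrm{const}_X(e)$ holds (with respect to the base context $|\Gamma|$).
   Context: Base types: $T ::= \mathsf{unit}\mid\mathsf{bool}\mid\mathsf{int}\mid L(T)\mid T*T$. Values: $v ::= () \mid \mathsf{true}\mid\mathsf{false}\mid n\ (n\in\mathbb Z)\mid [v_1,\dots,v_n]\ (n\ge 0$, the empty list being $\mathsf{nil})\mid (v_1,v_2)$. Value typing $\models v:T$: $()$ has type $\mathsf{unit}$, booleans have type $\mathsf{bool}$, integers have type $\mathsf{int}$, $(v_1,v_2):T_1*T_2$ if $\models v_i:T_i$, and $[v_1,\dots,v_n]:L(T)$ if every $\models v_i:T$ (so $\mathsf{nil}$ has every list type). Expressions (let-normal form; $x,x_i$ are variables, $f$ function identifiers): $e ::= () \mid \mathsf{true}\mid \mathsf{false}\mid n\mid x\mid \mathrm{op}_\diamond(x_1,x_2)\mid \mathrm{app}(f,x)\mid \mathrm{if}(x,e_t,e_f)\mid \mathrm{let}(x,e_1,x.e_2)\mid \mathrm{pair}(x_1,x_2)\mid \mathrm{match}(x,(x_1,x_2).e)\mid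 \mathsf{nil}\mid \mathrm{cons}(x_1,x_2)\mid\mathrm{match}(x,e_1,(x_h,x_t).e_2)\mid\mathrm{share}(x,(x_1,x_2).e)$, with $\diamond\in\{+,-,*,\mathrm{div},\mathrm{mod},=,<>,<,>,\mathrm{and},\mathrm{or}\}$. A program fixes for each function identifier $f$ a body $e_f$ with a single parameter variable $y^f$. An environment $E$ is a finite map from variables to values. Cost semantics: fix arbitrary rational constants $K^{\mathrm{unit}},K^{\mathrm{bool}},K^{\mathrm{int}},K^{\mathrm{nil}},K^{\mathrm{var}},K^{\mathrm{op}},K^{\mathrm{app}},K^{\mathrm{let}},K^{\mathrm{cond}},K^{\mathrm{pair}},K^{\mathrm{matchP}},K^{\mathrm{cons}},K^{\mathrm{matchN}},K^{\mathrm{matchL}}$. The judgement $E\vdash^{q}_{q'} e\Downarrow v$ (all counters $q,q'$ occurring in derivations are in $\mathbb Q_{\ge0}$) is defined inductively: $E\vdash^{q+K^{c}}_{q}c\Downarrow c$ for constants $c\in\{(),\mathsf{true},\mathsf{false},n,\mathsf{nil}\}$ with the corresponding constant $K^{\mathrm{unit}},K^{\mathrm{bool}},K^{\mathrm{int}},K^{\mathrm{nil}}$; $E\vdash^{q+K^{\mathrm{var}}}_q x\Downarrow E(x)$ for $x\in\mathrm{dom}(E)$; $E\vdash^{q+K^{\mathrm{op}}}_q\mathrm{op}_\diamond(x_1,x_2)\Downarrow E(x_1)\diamond E(x_2)$; $E\vdash^{q+K^{\mathrm{pair}}}_q \mathrm{pair}(x_1,x_2)\Downarrow (E(x_1),E(x_2))$;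 $E\vdash^{q+K^{\mathrm{cons}}}_q\mathrm{cons}(x_h,x_t)\Downarrow[v_1,\dots,v_n]$ if $E(x_h)=v_1$ and $E(x_t)=[v_2,\dots,v_n]$; if $E[y^f\mapsto E(x)]\vdash^q_{q'}e_f\Downarrow v$ then $E\vdash^{q+K^{\mathrm{app}}}_{q'}\mathrm{app}(f,x)\Downarrow v$; if $E\vdash^{q-K^{\mathrm{let}}}_{q_1}e_1\Downarrow v_1$ and $E[x\mapsto v_1]\vdash^{q_1}_{q'}e_2\Downarrow v$ then $E\vdash^q_{q'}\mathrm{let}(x,e_1,x.e_2)\Downarrow v$; if $E(x)=\mathsf{true}$ and $E\vdash^{q-K^{\mathrm{cond}}}_{q'}e_t\Downarrow v$ (resp. $E(x)=\mathsf{false}$ and $E\vdash^{q-K^{\mathrm{cond}}}_{q'}e_f\Downarrow v$) then $E\vdash^q_{q'}\mathrm{if}(x,e_t,e_f)\Downarrow v$; if $E(x)=(v_1,v_2)$ and $E[x_1\mapsto v_1,x_2\mapsto v_2]\vdash^{q-K^{\mathrm{matchP}}}_{q'}e\Downarrow v$ then $E\vdash^q_{q'}\mathrm{match}(x,(x_1,x_2).e)\Downarrow v$; if $E(x)=\mathsf{nil}$ and $E\vdash^{q-K^{\mathrm{matchN}}}_{q'}e_1\Downarrow v$ then $E\vdash^q_{q'}\mathrm{match}(x,e_1,(x_h,x_t).e_2)\Downarrow v$; if $E(x)=[v_1,\dots,v_n]$ with $n\ge1$ and $E[x_h\mapsto v_1,x_t\mapsto[v_2,\dots,v_n]]\vdash^{q-K^{\mathrm{matchL}}}_{q'}e_2\Downarrow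 v$ then $E\vdash^q_{q'}\mathrm{match}(x,e_1,(x_h,x_t).e_2)\Downarrow v$; if $E(x)=v_1$ and $(E\setminus\{x\})[x_1\mapsto v_1,x_2\mapsto v_1]\vdash^q_{q'}e\Downarrow v$ then $E\vdash^q_{q'}\mathrm{share}(x,(x_1,x_2).e)\Downarrow v$. We write $E\vdash e\Downarrow v$ if $E\vdash^q_{q'}e\Downarrow v$ for some $q,q'$. Size equivalence of values $|v|\approx|u|$ is the least relation with: $|v|\approx|u|$ whenever $\models v:T$ and $\models u:T$ for some $T\in\{\mathsf{unit},\mathsf{bool},\mathsf{int}\}$; $|(v_1,v_2)|\approx|(u_1,u_2)|$ if $|v_i|\approx|u_i|$ for $i=1,2$; $|[v_1,\dots,v_n]|\approx|[u_1,\dots,u_m]|$ if $m=n$ and $|v_i|\approx|u_i|$ for all $i$. A base context $\Delta$ is a finite map from variables to base types; an environment $E$ is well-formed w.r.t. $\Delta$, written $\models E:\Delta$, if $\models E(x):\Delta(x)$ for all $x\in\mathrm{dom}(\Delta)$. For $X\subseteq\mathrm{dom}(\Delta)$ and well-formed $E_1,E_2$, $E_1\approx_X E_2$ means $|E_1(x)|\approx|E_2(x)|$ for all $x\in X$. An expression $e$ is constant resource w.r.t. $X\subseteq\mathrm{dom}(\Delta)$, written $\mathrm{const}_X(e)$, if for all $E_1,E_2$ with $\models E_i:\Delta$ and $E_1\approx_X E_2$: whenever $E_1\vdash^{p_1}_{p_1'}e\Downarrow v_1$ and $E_2\vdash^{p_2}_{p_2'}e\Downarrow v_2$, then $p_1-p_1'=p_2-p_2'$.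 Resource-annotated types: $A ::= \mathsf{unit}\mid\mathsf{bool}\mid\mathsf{int}\mid L^p(A)\mid A*A$ with $p\in\mathbb Q_{\ge0}$; $|A|$ denotes the base type obtained by erasing annotations. An annotated context $\Gamma$ is a finite map from variables to annotated types, $|\Gamma|$ its erasure; $\Gamma_1,\Gamma_2$ denotes the union of contexts with disjoint domains (contexts are unordered). $\models E:\Gamma$ means $\models E(x):|\Gamma(x)|$ for all $x\in\mathrm{dom}(\Gamma)$. Potential: $\Phi(v:A)=0$ for $A\in\{\mathsf{unit},\mathsf{bool},\mathsf{int}\}$; $\Phi((v_1,v_2):A_1*A_2)=\Phi(v_1:A_1)+\Phi(v_2:A_2)$; $\Phi([v_1,\dots,v_n]:L^p(A))=n\cdot p+\sum_{i=1}^n\Phi(v_i:A)$; $\Phi_E(\Gamma)=\sum_{x\in\mathrm{dom}(\Gamma)}\Phi(E(x):\Gamma(x))$. Sharing relation: $\curlyvee(A\mid A,A)$ for $A\in\{\mathsf{unit},\mathsf{bool},\mathsf{int}\}$; $\curlyvee(A*B\mid A_1*B_1,A_2*B_2)$ if $\curlyvee(A\mid A_1,A_2)$ and $\curlyvee(B\mid B_1,B_2)$; $\curlyvee(L^p(A)\mid L^{p_1}(A_1),L^{p_2}(A_2))$ if $\curlyvee(A\mid A_1,A_2)$ and $p=p_1+p_2$. A signature $\Sigma$ maps function identifiers to nonempty sets of annotated function types $A_1\xrightarrow{q/q'}A_2$ ($q,q'\in\mathbb Q_{\ge0}$). Typing judgements $\Sigma;\Gamma\vdash^{q}_{q'}e:A$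 with $q,q'\in\mathbb Q_{\ge0}$ (every annotation in a rule instance must be a nonnegative rational). Syntax-directed rules: $\Sigma;\emptyset\vdash^{K^{\mathrm{unit}}}_0():\mathsf{unit}$; $\Sigma;\emptyset\vdash^{K^{\mathrm{bool}}}_0 b:\mathsf{bool}$; $\Sigma;\emptyset\vdash^{K^{\mathrm{int}}}_0 n:\mathsf{int}$; $\Sigma;\emptyset\vdash^{K^{\mathrm{nil}}}_0\mathsf{nil}:L^p(A)$; $\Sigma;x:A\vdash^{K^{\mathrm{var}}}_0x:A$; $\Sigma;x_1:\mathsf{bool},x_2:\mathsf{bool}\vdash^{K^{\mathrm{op}}}_0\mathrm{op}_\diamond(x_1,x_2):\mathsf{bool}$ for $\diamond\in\{\mathrm{and},\mathrm{or}\}$; $\Sigma;x_1:\mathsf{int},x_2:\mathsf{int}\vdash^{K^{\mathrm{op}}}_0\mathrm{op}_\diamond(x_1,x_2):\mathsf{bool}$ for comparisons and $:\mathsf{int}$ for $+,-,*,\mathrm{div},\mathrm{mod}$; if $A_1\xrightarrow{q/q'}A_2\in\Sigma(f)$ then $\Sigma;x:A_1\vdash^{q+K^{\mathrm{app}}}_{q'}\mathrm{app}(f,x):A_2$; from $\Sigma;\Gamma_1\vdash^{q-K^{\mathrm{let}}}_{q_1}e_1:A_1$ and $\Sigma;\Gamma_2,x:A_1\vdash^{q_1}_{q'}e_2:A_2$ infer $\Sigma;\Gamma_1,\Gamma_2\vdash^q_{q'}\mathrm{let}(x,e_1,x.e_2):A_2$; from $\Sigma;\Gamma\vdash^{q-K^{\mathrm{cond}}}_{q'}e_t:A$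 and $\Sigma;\Gamma\vdash^{q-K^{\mathrm{cond}}}_{q'}e_f:A$ infer $\Sigma;\Gamma,x:\mathsf{bool}\vdash^q_{q'}\mathrm{if}(x,e_t,e_f):A$; $\Sigma;x_1:A_1,x_2:A_2\vdash^{K^{\mathrm{pair}}}_0\mathrm{pair}(x_1,x_2):A_1*A_2$; from $\Sigma;\Gamma,x_1:A_1,x_2:A_2\vdash^{q-K^{\mathrm{matchP}}}_{q'}e:A$ infer $\Sigma;\Gamma,x:A_1*A_2\vdash^q_{q'}\mathrm{match}(x,(x_1,x_2).e):A$; $\Sigma;x_h:A,x_t:L^p(A)\vdash^{p+K^{\mathrm{cons}}}_0\mathrm{cons}(x_h,x_t):L^p(A)$; from $\Sigma;\Gamma\vdash^{q-K^{\mathrm{matchN}}}_{q'}e_1:B$ and $\Sigma;\Gamma,x_h:A,x_t:L^p(A)\vdash^{q+p-K^{\mathrm{matchL}}}_{q'}e_2:B$ infer $\Sigma;\Gamma,x:L^p(A)\vdash^q_{q'}\mathrm{match}(x,e_1,(x_h,x_t).e_2):B$; from $\Sigma;\Gamma,x_1:A_1,x_2:A_2\vdash^q_{q'}e:B$ and $\curlyvee(A\mid A_1,A_2)$ infer $\Sigma;\Gamma,x:A\vdash^q_{q'}\mathrm{share}(x,(x_1,x_2).e):B$. Structural rules of the constant-resource system: (Relax) from $\Sigma;\Gamma\vdash^p_{p'}e:A$, $q\ge p$ and $q-p=q'-p'$ infer $\Sigma;\Gamma\vdash^q_{q'}e:A$; (Weakening) from $\Sigma;\Gamma\vdash^q_{q'}e:B$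 and $\curlyvee(A\mid A,A)$ infer $\Sigma;\Gamma,x:A\vdash^q_{q'}e:B$. The program is well-typed w.r.t. $\Sigma$ in this system if for every $f$ and every $A_1\xrightarrow{q/q'}A_2\in\Sigma(f)$, $\Sigma;y^f:A_1\vdash^q_{q'}e_f:A_2$ is derivable. *)

(* Defs.v *)
From Stdlib Require Import ZArith.
From HB Require Import structures.
From mathcomp Require Import all_boot all_order all_algebra.
Set Implicit Arguments. Unset Strict Implicit. Unset Printing Implicit Defensive.
Import Order.TTheory GRing.Theory Num.Theory.
Local Open Scope ring_scope.

Inductive btype : Type :=
| TUnit | TBool | TInt | TList (T : btype) | TProd (T1 T2 : btype).

Inductive value : Type :=
| VUnit | VBool (b : bool) | VInt (n : Z) | VList (vs : seq value) | VPair (v1 v2 : value).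

Inductive vtype : value -> btype -> Prop :=
| vt_unit : vtype VUnit TUnit
| vt_bool b : vtype (VBool b) TBool
| vt_int n : vtype (VInt n) TInt
| vt_pair v1 v2 T1 T2 : vtype v1 T1 -> vtype v2 T2 -> vtype (VPair v1 v2) (TProd T1 T2)
| vt_list vs T : (forall v, List.In v vs -> vtype v T) -> vtype (VList vs) (TList T).

Definition var := nat.
Definition fid := nat.

Inductive binop : Type :=
| OAdd | OSub | OMul | ODiv | OMod | OEq | ONeq | OLt | OGt | OAnd | OOr.

Inductive expr : Type :=
| EUnit | ETrue | EFalse | EInt (n : Z)
| EVar (x : var)
| EOp (o : binop) (x1 x2 : var)
| EApp (f : fid) (x : var)
| EIf (x : var) (et ef : expr)
| ELet (x : var) (e1 e2 : expr)
| EPair (x1 x2 : var)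
| EMatchP (x x1 x2 : var) (e : expr)
| ENil
| ECons (xh xt : var)
| EMatchL (x : var) (e1 : expr) (xh xt : var) (e2 : expr)
| EShare (x x1 x2 : var) (e : expr).

(* v1 <> v2 computed by the primitive operator; arithmetic and comparisons on
   integers, and/or on booleans; div/mod are Stdlib's total Z.div / Z.modulo. *)
Definition op_eval (o : binop) (v1 v2 : value) : option value :=
  match o, v1, v2 with
  | OAdd, VInt a, VInt b => Some (VInt (Z.add a b))
  | OSub, VInt a, VInt b => Some (VInt (Z.sub a b))
  | OMul, VInt a, VInt b => Some (VInt (Z.mul a b))
  | ODiv, VInt a, VInt b => Some (VInt (Z.div a b))
  | OMod, VInt a, VInt b => Some (VInt (Z.modulo a b))
  | OEq, VInt a, VInt b => Some (VBool (Z.eqb a b))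
  | ONeq, VInt a, VInt b => Some (VBool (negb (Z.eqb a b)))
  | OLt, VInt a, VInt b => Some (VBool (Z.ltb a b))
  | OGt, VInt a, VInt b => Some (VBool (Z.ltb b a))
  | OAnd, VBool a, VBool b => Some (VBool (a && b))
  | OOr, VBool a, VBool b => Some (VBool (a || b))
  | _, _, _ => None
  end.

Definition program := fid -> (var * expr).

Record costs := Costs {
  K_unit : rat; K_bool : rat; K_int : rat; K_nil : rat; K_var : rat;
  K_op : rat; K_app : rat; K_let : rat; K_cond : rat; K_pair : rat;
  K_matchP : rat; K_cons : rat; K_matchN : rat; K_matchL : rat }.

Definition env := var -> option value.
Definition upd (E : env) (x : var) (v : value) : env :=
  fun y => if y == x then Some v else E y.
Definition remove (E : env) (x : var) : env :=
  fun y => if y == x then None else E y.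

Inductive eval (K : costs) (P : program) : env -> rat -> rat -> expr -> value -> Prop :=
| ev_unit E q : 0 <= q -> 0 <= q + K_unit K ->
    eval K P E (q + K_unit K) q EUnit VUnit
| ev_true E q : 0 <= q -> 0 <= q + K_bool K ->
    eval K P E (q + K_bool K) q ETrue (VBool true)
| ev_false E q : 0 <= q -> 0 <= q + K_bool K ->
    eval K P E (q + K_bool K) q EFalse (VBool false)
| ev_int E q n : 0 <= q -> 0 <= q + K_int K ->
    eval K P E (q + K_int K) q (EInt n) (VInt n)
| ev_nil E q : 0 <= q -> 0 <= q + K_nil K ->
    eval K P E (q + K_nil K) q ENil (VList [::])
| ev_var E q x v : 0 <= q -> 0 <= q + K_var K -> E x = Some v ->
    eval K P E (q + K_var K) q (EVar x) v
| ev_op E q o x1 x2 v1 v2 v : 0 <= q -> 0 <= q + K_op K ->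
    E x1 = Some v1 -> E x2 = Some v2 -> op_eval o v1 v2 = Some v ->
    eval K P E (q + K_op K) q (EOp o x1 x2) v
| ev_pair E q x1 x2 v1 v2 : 0 <= q -> 0 <= q + K_pair K ->
    E x1 = Some v1 -> E x2 = Some v2 ->
    eval K P E (q + K_pair K) q (EPair x1 x2) (VPair v1 v2)
| ev_cons E q xh xt vh vs : 0 <= q -> 0 <= q + K_cons K ->
    E xh = Some vh -> E xt = Some (VList vs) ->
    eval K P E (q + K_cons K) q (ECons xh xt) (VList (vh :: vs))
| ev_app E q q' f x vx v : 0 <= q + K_app K -> E x = Some vx ->
    eval K P (upd E (P f).1 vx) q q' (P f).2 v ->
    eval K P E (q + K_app K) q' (EApp f x) v
| ev_let E q q1 q' x e1 e2 v1 v : 0 <= q ->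
    eval K P E (q - K_let K) q1 e1 v1 ->
    eval K P (upd E x v1) q1 q' e2 v ->
    eval K P E q q' (ELet x e1 e2) v
| ev_if_true E q q' x et ef v : 0 <= q -> E x = Some (VBool true) ->
    eval K P E (q - K_cond K) q' et v ->
    eval K P E q q' (EIf x et ef) v
| ev_if_false E q q' x et ef v : 0 <= q -> E x = Some (VBool false) ->
    eval K P E (q - K_cond K) q' ef v ->
    eval K P E q q' (EIf x et ef) v
| ev_matchP E q q' x x1 x2 e v1 v2 v : 0 <= q -> E x = Some (VPair v1 v2) ->
    eval K P (upd (upd E x1 v1) x2 v2) (q - K_matchP K) q' e v ->
    eval K P E q q' (EMatchP x x1 x2 e) v
| ev_matchN E q q' x e1 xh xt e2 v : 0 <= q -> E x = Some (VList [::]) ->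
    eval K P E (q - K_matchN K) q' e1 v ->
    eval K P E q q' (EMatchL x e1 xh xt e2) v
| ev_matchL E q q' x e1 xh xt e2 vh vs v : 0 <= q -> E x = Some (VList (vh :: vs)) ->
    eval K P (upd (upd E xh vh) xt (VList vs)) (q - K_matchL K) q' e2 v ->
    eval K P E q q' (EMatchL x e1 xh xt e2) v
| ev_share E q q' x x1 x2 e v1 v : E x = Some v1 ->
    eval K P (upd (upd (remove E x) x1 v1) x2 v1) q q' e v ->
    eval K P E q q' (EShare x x1 x2 e) v.

Definition evals K P E e v : Prop := exists q q', eval K P E q q' e v.

Definition is_prim (T : btype) : bool :=
  match T with TUnit | TBool | TInt => true | _ => false end.

Inductive size_eq : value -> value -> Prop :=
| se_prim v u T : is_prim T -> vtype v T -> vtype u T -> size_eq v u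
| se_pair v1 v2 u1 u2 : size_eq v1 u1 -> size_eq v2 u2 ->
    size_eq (VPair v1 v2) (VPair u1 u2)
| se_list vs us : size vs = size us ->
    (forall i : nat, (i < size vs)%N -> size_eq (nth VUnit vs i) (nth VUnit us i)) ->
    size_eq (VList vs) (VList us).

Definition bctx := var -> option btype.

Definition env_wf (E : env) (D : bctx) : Prop :=
  forall x T, D x = Some T -> exists v, E x = Some v /\ vtype v T.

Definition env_approx (X : var -> Prop) (E1 E2 : env) : Prop :=
  forall x, X x -> exists v1 v2, E1 x = Some v1 /\ E2 x = Some v2 /\ size_eq v1 v2.

Definition const_res (K : costs) (P : program) (D : bctx) (X : var -> Prop) (e : expr) : Prop :=
  forall E1 E2, env_wf E1 D -> env_wf E2 D -> env_approx X E1 E2 ->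
  forall p1 p1' v1 p2 p2' v2,
    eval K P E1 p1 p1' e v1 -> eval K P E2 p2 p2' e v2 -> p1 - p1' = p2 - p2'.

Record nnrat := NNRat { nnval :> rat; nnval_ge0 : 0 <= nnval }.

Inductive atype : Type :=
| AUnit | ABool | AInt | AList (p : nnrat) (A : atype) | APair (A1 A2 : atype).

Fixpoint erase (A : atype) : btype :=
  match A with
  | AUnit => TUnit | ABool => TBool | AInt => TInt
  | AList _ A => TList (erase A)
  | APair A1 A2 => TProd (erase A1) (erase A2)
  end.

Definition ctx := var -> option atype.
Definition cempty : ctx := fun _ => None.
Definition cext (G : ctx) (x : var) (A : atype) : ctx :=
  fun y => if y == x then Some A else G y.
Definition csing (x : var) (A : atype) : ctx := cext cempty x A.
Definition cunion (G1 G2 : ctx) : ctx :=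
  fun y => match G1 y with Some A => Some A | None => G2 y end.
Definition cdisj (G1 G2 : ctx) : Prop := forall y, G1 y = None \/ G2 y = None.
Definition cerase (G : ctx) : bctx := fun y => omap erase (G y).

Definition env_wf_ctx (E : env) (G : ctx) : Prop := env_wf E (cerase G).

Inductive share : atype -> atype -> atype -> Prop :=
| sh_unit : share AUnit AUnit AUnit
| sh_bool : share ABool ABool ABool
| sh_int : share AInt AInt AInt
| sh_pair A B A1 B1 A2 B2 : share A A1 A2 -> share B B1 B2 ->
    share (APair A B) (APair A1 B1) (APair A2 B2)
| sh_list p A p1 A1 p2 A2 : share A A1 A2 -> nnval p = nnval p1 + nnval p2 ->
    share (AList p A) (AList p1 A1) (AList p2 A2).

(* signature: Sig f A1 q q' A2  means  A1 -q/q'-> A2 ∈ Σ(f) *)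
Definition signature := fid -> atype -> rat -> rat -> atype -> Prop.
Definition sig_nonneg (S : signature) : Prop :=
  forall f A1 q q' A2, S f A1 q q' A2 -> 0 <= q /\ 0 <= q'.

Definition arith_op (o : binop) : bool :=
  match o with OAdd | OSub | OMul | ODiv | OMod => true | _ => false end.
Definition cmp_op (o : binop) : bool :=
  match o with OEq | ONeq | OLt | OGt => true | _ => false end.
Definition bool_op (o : binop) : bool :=
  match o with OAnd | OOr => true | _ => false end.

Inductive typed (K : costs) (S : signature) : ctx -> rat -> rat -> expr -> atype -> Prop :=
| ty_unit : 0 <= K_unit K -> typed K S cempty (K_unit K) 0 EUnit AUnit
| ty_true : 0 <= K_bool K -> typed K S cempty (K_bool K) 0 ETrue ABool
| ty_false : 0 <= K_bool K -> typed K S cempty (K_bool K) 0 EFalse ABool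
| ty_int n : 0 <= K_int K -> typed K S cempty (K_int K) 0 (EInt n) AInt
| ty_nil p A : 0 <= K_nil K -> typed K S cempty (K_nil K) 0 ENil (AList p A)
| ty_var x A : 0 <= K_var K -> typed K S (csing x A) (K_var K) 0 (EVar x) A
| ty_op_bool o x1 x2 : bool_op o -> x1 <> x2 -> 0 <= K_op K ->
    typed K S (cext (csing x1 ABool) x2 ABool) (K_op K) 0 (EOp o x1 x2) ABool
| ty_op_cmp o x1 x2 : cmp_op o -> x1 <> x2 -> 0 <= K_op K ->
    typed K S (cext (csing x1 AInt) x2 AInt) (K_op K) 0 (EOp o x1 x2) ABool
| ty_op_arith o x1 x2 : arith_op o -> x1 <> x2 -> 0 <= K_op K ->
    typed K S (cext (csing x1 AInt) x2 AInt) (K_op K) 0 (EOp o x1 x2) AInt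
| ty_app f x A1 A2 q q' : S f A1 q q' A2 -> 0 <= q + K_app K -> 0 <= q' ->
    typed K S (csing x A1) (q + K_app K) q' (EApp f x) A2
| ty_let G1 G2 q q1 q' x e1 e2 A1 A2 :
    cdisj G1 G2 -> G2 x = None -> 0 <= q -> 0 <= q' ->
    typed K S G1 (q - K_let K) q1 e1 A1 ->
    typed K S (cext G2 x A1) q1 q' e2 A2 ->
    typed K S (cunion G1 G2) q q' (ELet x e1 e2) A2
| ty_if G q q' x et ef A : G x = None -> 0 <= q -> 0 <= q' ->
    typed K S G (q - K_cond K) q' et A ->
    typed K S G (q - K_cond K) q' ef A ->
    typed K S (cext G x ABool) q q' (EIf x et ef) A
| ty_pair x1 x2 A1 A2 : x1 <> x2 -> 0 <= K_pair K ->
    typed K S (cext (csing x1 A1) x2 A2) (K_pair K) 0 (EPair x1 x2) (APair A1 A2)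
| ty_matchP G q q' x x1 x2 e A1 A2 A :
    G x = None -> G x1 = None -> G x2 = None -> x1 <> x2 -> 0 <= q -> 0 <= q' ->
    typed K S (cext (cext G x1 A1) x2 A2) (q - K_matchP K) q' e A ->
    typed K S (cext G x (APair A1 A2)) q q' (EMatchP x x1 x2 e) A
| ty_cons xh xt (p : nnrat) A : xh <> xt -> 0 <= nnval p + K_cons K ->
    typed K S (cext (csing xh A) xt (AList p A)) (nnval p + K_cons K) 0 (ECons xh xt) (AList p A)
| ty_matchL G q q' x e1 xh xt e2 (p : nnrat) A B :
    G x = None -> G xh = None -> G xt = None -> xh <> xt -> 0 <= q -> 0 <= q' ->
    typed K S G (q - K_matchN K) q' e1 B ->
    typed K S (cext (cext G xh A) xt (AList p A)) (q + nnval p - K_matchL K) q' e2 B ->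
    typed K S (cext G x (AList p A)) q q' (EMatchL x e1 xh xt e2) B
| ty_share G q q' x x1 x2 e A A1 A2 B :
    G x = None -> G x1 = None -> G x2 = None -> x1 <> x2 -> 0 <= q -> 0 <= q' ->
    typed K S (cext (cext G x1 A1) x2 A2) q q' e B ->
    share A A1 A2 ->
    typed K S (cext G x A) q q' (EShare x x1 x2 e) B
| ty_relax G p p' q q' e A :
    typed K S G p p' e A -> p <= q -> q - p = q' - p' -> 0 <= q' ->
    typed K S G q q' e A
| ty_weak G q q' x e A B :
    G x = None -> typed K S G q q' e B -> share A A A ->
    typed K S (cext G x A) q q' e B.

Definition prog_welltyped (K : costs) (P : program) (S : signature) : Prop :=
  forall f A1 q q' A2, S f A1 q q' A2 -> typed K S (csing (P f).1 A1) q q' (P f).2 A2.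

(* Main.v *)
Require Import Defs.
From Stdlib Require Import ZArith Classical.
From HB Require Import structures.
From mathcomp Require Import all_boot all_order all_algebra.
From mathcomp Require Import ring lra zify.
Set Implicit Arguments. Unset Strict Implicit. Unset Printing Implicit Defensive.
Import Order.TTheory GRing.Theory Num.Theory.
Local Open Scope ring_scope.


Fixpoint phi (v : value) (A : atype) {struct v} : rat :=
  match v, A with
  | VPair v1 v2, APair A1 A2 => phi v1 A1 + phi v2 A2
  | VList vs, AList p B =>
      (fix phil (ws : seq value) : rat :=
         match ws with [::] => 0 | w :: ws' => nnval p + phi w B + phil ws' end) vs
  | _, _ => 0
  end.

Lemma phi_cons w ws p B :
  phi (VList (w :: ws)) (AList p B) = nnval p + phi w B + phi (VList ws) (AList p B).
Proof. reflexivity. Qed.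

Lemma phi_nil p B : phi (VList [::]) (AList p B) = 0.
Proof. reflexivity. Qed.

Lemma phi_share A A1 A2 : share A A1 A2 -> forall v, phi v A = phi v A1 + phi v A2.
Proof.
induction 1; intro v; destruct v; try (simpl; ring).
- simpl; rewrite IHshare1 IHshare2; ring.
- elim: vs => [|w ws IHws]; first by rewrite !phi_nil addr0.
  rewrite !phi_cons IHws IHshare H0; ring.
Qed.

Lemma phi_share0 A v : share A A A -> phi v A = 0.
Proof. move=> H; have := phi_share H v; lra. Qed.

Lemma phi_size v u : size_eq v u -> forall A, phi v A = phi u A.
Proof.
induction 1.
- destruct T; try discriminate; inversion H0; inversion H1; subst; destruct A; reflexivity.
- destruct A; simpl; rewrite ?IHsize_eq1 ?IHsize_eq2 //.
- intro A; destruct A as [| | | p B |]; try reflexivity.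
  elim: vs us H H1 {H0} => [|w ws IHws] [|z zs] // Hs IH.
  rewrite !phi_cons (IH 0%N) // (IHws zs) //; first by case: Hs.
  move=> i Hi; exact: (IH i.+1).
Qed.

Definition ophi (o : option value) (oA : option atype) : rat :=
  match o, oA with Some v, Some A => phi v A | _, _ => 0 end.

Lemma ophi_None o : ophi o None = 0.
Proof. by case: o. Qed.

Definition bound (G : ctx) (N : nat) := forall y, G y <> None -> (y < N)%N.

Definition phiC (E : env) (G : ctx) (N : nat) : rat :=
  \sum_(0 <= y < N) ophi (E y) (G y).

Lemma phiC_N E G N1 N2 : bound G N1 -> bound G N2 -> phiC E G N1 = phiC E G N2.
Proof.
wlog le: N1 N2 / (N1 <= N2)%N.
  move=> W b1 b2; case: (leqP N1 N2) => h; first exact: W.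
  symmetry; apply: W => //; exact: ltnW.
move=> b1 b2; rewrite /phiC (@big_cat_nat _ _ _ N1 0 N2 _ _ (leq0n N1) le) /=.
rewrite [X in _ = _ + X]big1_seq ?addr0 // => y /andP[_]; rewrite mem_index_iota => /andP[h1 _].
case HG: (G y) => [B|]; last by rewrite ophi_None.
have := b1 y; rewrite HG => /(_ ltac:(discriminate)) h; exfalso.
have := leq_ltn_trans h1 h; by rewrite ltnn.
Qed.

Lemma phiC_pt E1 G1 E2 G2 N :
  (forall y, ophi (E1 y) (G1 y) = ophi (E2 y) (G2 y)) -> phiC E1 G1 N = phiC E2 G2 N.
Proof. move=> H; apply: eq_bigr => y _; exact: H. Qed.

Lemma sum_delta (N x : nat) (c : rat) : (x < N)%N ->
  \sum_(0 <= y < N) (if y == x then c else 0) = c.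
Proof.
move=> h; rewrite (bigD1_seq x) ?mem_index_iota ?iota_uniq //= eqxx.
by rewrite big1 ?addr0 // => y /negbTE ->.
Qed.

Lemma phiC_cext E G N x A : G x = None -> (x < N)%N ->
  phiC E (cext G x A) N = phiC E G N + ophi (E x) (Some A).
Proof.
move=> Hx hN; rewrite /phiC -(sum_delta (ophi (E x) (Some A)) hN) -big_split /=.
apply: eq_bigr => y _; rewrite /cext; case: eqP => [->|_].
  by rewrite Hx ophi_None add0r.
by rewrite addr0.
Qed.

Lemma phiC_upd E G N x A w : G x = None -> (x < N)%N ->
  phiC (upd E x w) (cext G x A) N = phiC E G N + phi w A.
Proof.
move=> Hx hN; rewrite phiC_cext //; rewrite /upd eqxx /=; congr (_ + _).
apply: phiC_pt => y; rewrite /upd; case: eqP => [->|//]; by rewrite Hx !ophi_None.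
Qed.

Lemma phiC_remove E G N x : G x = None -> phiC (remove E x) G N = phiC E G N.
Proof.
move=> Hx; apply: phiC_pt => y; rewrite /remove; case: eqP => [->|//]; by rewrite Hx !ophi_None.
Qed.

Lemma phiC_union E G1 G2 N : cdisj G1 G2 ->
  phiC E (cunion G1 G2) N = phiC E G1 N + phiC E G2 N.
Proof.
move=> Hd; rewrite /phiC -big_split /=; apply: eq_bigr => y _; rewrite /cunion.
case H1: (G1 y) => [B|]; last by rewrite ophi_None add0r.
case: (Hd y) => H; first by rewrite H1 in H.
by rewrite H ophi_None addr0.
Qed.

Lemma phiC_empty E N : phiC E cempty N = 0.
Proof. by rewrite /phiC big1 // => y _; rewrite ophi_None. Qed.

Lemma bound_cext_inv G x A N : bound (cext G x A) N -> bound G N /\ (x < N)%N.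
Proof.
move=> b; split.
  move=> y Hy; apply: b; rewrite /cext; case: eqP => // _.
apply: b; rewrite /cext eqxx //.
Qed.

Lemma bound_cext G x A N : bound G N -> (x < N)%N -> bound (cext G x A) N.
Proof. move=> b hx y; rewrite /cext; case: eqP => [->//|_]; exact: b. Qed.

Lemma bound_mono G N M : bound G N -> (N <= M)%N -> bound G M.
Proof. move=> b h y Hy; exact: leq_trans (b y Hy) h. Qed.

Lemma bound_union G1 G2 N : bound (cunion G1 G2) N -> bound G1 N /\ bound G2 N.
Proof.
move=> b; split=> y Hy; apply: b; rewrite /cunion.
  by case: (G1 y) Hy.
by case: (G1 y).
Qed.

Lemma bound_union_intro G1 G2 N : bound G1 N -> bound G2 N -> bound (cunion G1 G2) N.
Proof.
move=> b1 b2 y; rewrite /cunion; case H: (G1 y) => [B|] Hy.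
  apply: b1; by rewrite H.
exact: b2.
Qed.

Lemma bound_empty N : bound cempty N.
Proof. by move=> y; rewrite /cempty. Qed.

Lemma typed_fin K S G q q' e A : typed K S G q q' e A -> exists N, bound G N.
Proof.
induction 1;
  repeat match goal with H : exists _, _ |- _ => destruct H end.
all: try (exists 0%N; exact: bound_empty).
all: try (exists (maxn x1 x2).+1; apply: bound_cext; [apply: bound_cext; [exact: bound_empty|] | ]; rewrite ltnS ?leq_maxl ?leq_maxr //).
all: try (exists (maxn xh xt).+1; apply: bound_cext; [apply: bound_cext; [exact: bound_empty|] | ]; rewrite ltnS ?leq_maxl ?leq_maxr //).
all: try (exists x.+1; apply: bound_cext; [exact: bound_empty| by []]).
all: repeat match goal with H : bound (cext _ _ _) _ |- _ => destruct (bound_cext_inv H) as [? ?]; clear H end.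
all: try (eexists; eassumption).
all: try (match goal with H : bound ?G ?n |- exists N, bound (cext ?G ?x _) N =>
   exists (maxn n x.+1); apply: bound_cext; [apply: (bound_mono H); exact: leq_maxl | by rewrite leq_max ltnSn orbT] end).
match goal with H1 : bound G1 ?n1, H2 : bound G2 ?n2 |- _ =>
  exists (maxn n1 n2); apply: bound_union_intro; [apply: (bound_mono H1); exact: leq_maxl | apply: (bound_mono H2); exact: leq_maxr] end.
Qed.

Lemma phi_bool v : phi v ABool = 0. Proof. by case: v. Qed.
Lemma phi_int v : phi v AInt = 0. Proof. by case: v. Qed.
Lemma phi_unit v : phi v AUnit = 0. Proof. by case: v. Qed.

Lemma bound2 G N x1 x2 A1 A2 : bound G N ->
  bound (cext (cext G x1 A1) x2 A2) (maxn N (maxn x1 x2).+1).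
Proof.
move=> b; apply: bound_cext; first apply: bound_cext.
- apply: (bound_mono b); exact: leq_maxl.
- lia.
- lia.
Qed.

Lemma phiC_upd2 E G N x1 x2 A1 A2 v1 v2 : G x1 = None -> G x2 = None -> x1 <> x2 ->
  bound G N ->
  phiC (upd (upd E x1 v1) x2 v2) (cext (cext G x1 A1) x2 A2) (maxn N (maxn x1 x2).+1)
  = phiC E G N + phi v1 A1 + phi v2 A2.
Proof.
move=> h1 h2 hne b.
have bm := bound_mono b (leq_maxl N (maxn x1 x2).+1).
have l1 : (x1 < maxn N (maxn x1 x2).+1)%N by lia.
have l2 : (x2 < maxn N (maxn x1 x2).+1)%N by lia.
have hx2 : cext G x1 A1 x2 = None.
  rewrite /cext; case: eqP => // e; by case: hne.
rewrite (phiC_upd _ _ _ hx2 l2) (phiC_upd _ _ _ h1 l1) (phiC_N _ bm b) //.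
Qed.


Definition SND E (p p' : rat) v G (q q' : rat) A :=
  forall N, bound G N -> p - p' = q + phiC E G N - q' - phi v A.

Lemma relax_case E p p' v G p0 p0' q q' A :
  SND E p p' v G p0 p0' A -> q - p0 = q' - p0' -> SND E p p' v G q q' A.
Proof. move=> H h N b; rewrite (H N b); lra. Qed.

Lemma weak_case E p p' v G q q' x A B : G x = None -> share A A A ->
  SND E p p' v G q q' B -> SND E p p' v (cext G x A) q q' B.
Proof.
move=> Hx Hs H N b; case: (bound_cext_inv b) => bG hx.
rewrite phiC_cext // (H N bG); case: (E x) => [w|] /=; rewrite ?(phi_share0 w Hs); ring.
Qed.

Lemma ophi_SS v A : ophi (Some v) (Some A) = phi v A. Proof. by []. Qed.

Lemma sound K P S : prog_welltyped K P S -> forall E p p' e v,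
  eval K P E p p' e v -> forall G q q' A, typed K S G q q' e A -> SND E p p' v G q q' A.
Proof.
move=> Hwt; induction 1; intros G0 q0 q0' A0 Hty;
match type of Hty with typed _ _ _ _ _ ?ex _ => remember ex as ee eqn:Hee end;
induction Hty; try discriminate Hee;
try (eapply relax_case; [apply: IHHty; exact Hee | assumption]);
try (eapply weak_case; [assumption|assumption| apply: IHHty; exact Hee]).
all: intros N b; try rewrite /csing in b.
all: repeat match goal with bb : bound (cext _ _ _) _ |- _ => destruct (bound_cext_inv bb) as [? ?]; clear bb end.
all: try (inversion Hee; subst; clear Hee).
1-11: rewrite ?/csing ?phiC_cext ?phiC_empty //;
  try (rewrite /cext /cempty; case: eqP => // ?; subst; congruence).
1-11: repeat match goal with H : ?E ?x = Some _ |- context[?E ?x] => rewrite H end.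
1-11: rewrite /= ?phi_bool ?phi_int ?phi_unit; try ring.
- have Ht := Hwt _ _ _ _ _ H2.
  have := IHeval _ _ _ _ Ht ((P f).1.+1) (bound_cext (@bound_empty _) (ltnSn _)).
  rewrite /csing phiC_upd // phiC_empty phiC_cext // phiC_empty H0 /=; lra.
- case: (bound_union b) => b1 b2.
  have h1 := IHeval1 _ _ _ _ Hty1 N b1.
  have hx : (x < maxn N x.+1)%N by rewrite leq_max ltnSn orbT.
  have b2m := bound_mono b2 (leq_maxl N x.+1).
  have h2 := IHeval2 _ _ _ _ Hty2 _ (bound_cext b2m hx).
  erewrite phiC_upd in h2; [|exact: H3|exact: hx].
  rewrite -(phiC_N _ b2 b2m) in h2.
  rewrite phiC_union //; lra.
- have h := IHeval _ _ _ _ Hty1 N H5.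
  rewrite phiC_cext // H0 /= ?phi_bool; lra.
- have h := IHeval _ _ _ _ Hty2 N H5.
  rewrite phiC_cext // H0 /= ?phi_bool; lra.
- have h := IHeval _ _ _ _ Hty _ (bound2 (x1:=x1) (x2:=x2) (A1:=A1) (A2:=A2) H8).
  rewrite phiC_upd2 // in h.
  rewrite phiC_cext // H0 /=; lra.
- have h := IHeval _ _ _ _ Hty1 N H8.
  rewrite phiC_cext // H0 ophi_SS phi_nil; lra.
- have h := IHeval _ _ _ _ Hty2 _ (bound2 (x1:=xh) (x2:=xt) (A1:=A) (A2:=AList p A) H8).
  rewrite phiC_upd2 // in h.
  rewrite phiC_cext // H0 ophi_SS phi_cons; lra.
- have h := IHeval _ _ _ _ Hty _ (bound2 (x1:=x1) (x2:=x2) (A1:=A1) (A2:=A2) H8).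
  rewrite phiC_upd2 // phiC_remove // in h.
  rewrite phiC_cext // H ophi_SS (phi_share H7); lra.
Qed.


Theorem theorem3 (K : costs) (P : program) (S : signature) :
  sig_nonneg S -> prog_welltyped K P S ->
  forall (G : ctx) (X : var -> Prop) (E : env) (e : expr) (v : value)
         (q q' : rat) (A : atype),
    (forall x, X x -> G x <> None) ->
    env_wf_ctx E G ->
    evals K P E e v ->
    typed K S G q q' e A ->
    share A A A ->
    (forall x B, G x = Some B -> ~ X x -> share B B B) ->
    const_res K P (cerase G) X e.
Proof.
move=> _ Hwt G X E e v q q' A _ _ _ Hty HA Hsh.
move=> E1 E2 _ _ Happ p1 p1' v1 p2 p2' v2 H1 H2.
case: (typed_fin Hty) => N b.
rewrite (sound Hwt H1 Hty b) (sound Hwt H2 Hty b) !(phi_share0 _ HA).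
congr (_ - _ - _); congr (_ + _); apply: phiC_pt => y.
case HG: (G y) => [B|]; last by rewrite !ophi_None.
case: (classic (X y)) => hX.
  case: (Happ y hX) => w1 [w2 [-> [-> Hs]]].
  exact: phi_size.
have HB := Hsh y B HG hX.
case: (E1 y) => [w1|]; case: (E2 y) => [w2|] //=; rewrite ?(phi_share0 _ HB) //.
Qed.
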